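(* Let $z$ be a perfect element of $D^{2,2,2}$, let $i\neq j$ in $\{1,2,3\}$, and let $u\in D^{2,2,2}$. Suppose that for every indecomposable representation $\rho$, $$\varphi_i(\Phi^+\rho(z))+\varphi_j(\Phi^+\rho(z))=\rho(u).$$ Then $u$ is perfect.
   Context: $D^{2,2,2}$ is the modular lattice generated by $x_1,y_1,x_2,y_2,x_3,y_3$ subject only to $x_i\subseteq y_i$ ($i=1,2,3$), with a greatest element $I$ adjoined. Meet is written $ab$, join $a+b$. A representation $\rho$ of $D^{2,2,2}$ in a finite-dimensional vector space $X_0$ is a lattice morphism from $D^{2,2,2}$ to the subspace lattice of $X_0$, with $\rho(I)=X_0$. Write $X_i=\rho(x_i)\subseteq Y_i=\rho(y_i)$. $\rho$ is indecomposable if $X_0\neq0$ and there is no decomposition $X_0=X'\oplus X''$ with $X',X''\neq0$ and $\rho(a)=(\rho(a)\cap X')+(\rho(a)\cap X'')$ for all $a$. An element $a$ is perfect if $\rho(a)\in\{0,X_0\}$ for every indecomposable $\rho$. Put $R=Y_1\oplus Y_2\oplus Y_3$ and $X^1_0=\{(\eta_1,\eta_2,\eta_3)\in R:\sum\eta_i=0\}$. Let $G'_i\subseteq R$ be the triples with $i$-th coordinate in $X_i$, and $H'_i\subseteq R$ the triples with $i$-th coordinate $0$. $\Phi^+\rho$ is the representation in $X^1_0$ with $\Phi^+\rho(y_i)=G'_i\cap X^1_0$, $\Phi^+\rho(x_i)=H'_i\cap X^1_0$, $\Phi^+\rho(I)=X^1_0$. The elementary map $\varphi_i:X^1_0\to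 X_0$ is $(\eta_1,\eta_2,\eta_3)\mapsto\eta_i$; $\varphi_i(S)$ denotes the image of a subspace $S$. *)

(* Defs.v *)
From HB Require Import structures.
From mathcomp Require Import all_boot all_order all_algebra.
Set Implicit Arguments. Unset Strict Implicit. Unset Printing Implicit Defensive.
Import GRing.Theory.
Local Open Scope ring_scope.
Local Open Scope vspace_scope.

(* Lattice terms over the generators x_i, y_i (i : 'I_3, index i stands for
   i+1 in the paper) and the adjoined top I. Every element of D^{2,2,2} is
   represented by such a term; the value of a representation on an element
   does not depend on the chosen representative (subspace lattices are
   modular), so quantifying over terms = quantifying over D^{2,2,2}. *)
Inductive D222 : Type :=
  | Dx of 'I_3
  | Dy of 'I_3
  | DI
  | Dmeet of D222 & D222
  | Djoin of D222 & D222.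

Fixpoint evalD (K : fieldType) (V : vectType K) (top : {vspace V})
    (gx gy : 'I_3 -> {vspace V}) (a : D222) : {vspace V} :=
  match a with
  | Dx i => gx i
  | Dy i => gy i
  | DI => top
  | Dmeet a b => (evalD top gx gy a :&: evalD top gx gy b)%VS
  | Djoin a b => (evalD top gx gy a + evalD top gx gy b)%VS
  end.

(* A representation of D^{2,2,2} in the finite-dimensional space X_0 = V
   (the whole space): subspaces X_i <= Y_i. *)
Record rep (K : fieldType) (V : vectType K) := Rep {
  repX : 'I_3 -> {vspace V};
  repY : 'I_3 -> {vspace V};
  repXY : forall i, (repX i <= repY i)%VS
}.

Definition rho (K : fieldType) (V : vectType K) (r : rep V) (a : D222) :
  {vspace V} := evalD fullv (repX r) (repY r) a.

Definition indecomposable (K : fieldType) (V : vectType K) (r : rep V) : Prop :=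
  (fullv != 0 :> {vspace V})%VS /\
  ~ (exists X1 X2 : {vspace V},
       [/\ X1 != 0%VS, X2 != 0%VS, (X1 :&: X2 = 0)%VS, (X1 + X2 = fullv)%VS &
        forall a : D222, rho r a = (rho r a :&: X1 + rho r a :&: X2)%VS]).

Definition perfect (K : fieldType) (a : D222) : Prop :=
  forall (V : vectType K) (r : rep V), indecomposable r ->
    rho r a = 0%VS \/ rho r a = fullv.

Definition triple (K : fieldType) (V : vectType K) := {ffun 'I_3 -> V}.

Definition coordf (K : fieldType) (V : vectType K) (i : 'I_3) :
  'Hom(triple V, V) := linfun (fun eta : triple V => eta i).

Definition sumf (K : fieldType) (V : vectType K) :
  'Hom(triple V, V) := linfun (fun eta : triple V => (\sum_(k < 3) eta k)%R).

Section PhiPlus.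
Variables (K : fieldType) (V : vectType K) (r : rep V).

(* R = Y_1 (+) Y_2 (+) Y_3, realized as the triples with eta_k in Y_k *)
Definition Rsp : {vspace triple V} :=
  \bigcap_(k < 3) (coordf V k @^-1: repY r k).

Definition X10 : {vspace triple V} := Rsp :&: lker (sumf V).

Definition Gp (i : 'I_3) : {vspace triple V} := Rsp :&: (coordf V i @^-1: repX r i).
Definition Hp (i : 'I_3) : {vspace triple V} := Rsp :&: lker (coordf V i).

Definition PhiPlus (a : D222) : {vspace triple V} :=
  evalD X10 (fun i => Hp i :&: X10) (fun i => Gp i :&: X10) a.

Definition phi (i : 'I_3) (S : {vspace triple V}) : {vspace V} :=
  (coordf V i @: S)%VS.

End PhiPlus.

(* Main.v *)
Require Import Defs.
From HB Require Import structures.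
From mathcomp Require Import all_boot all_order all_algebra.
Set Implicit Arguments. Unset Strict Implicit. Unset Printing Implicit Defensive.
Import GRing.Theory.
Local Open Scope ring_scope.
Local Open Scope vspace_scope.

Section Basic.
Variables (K : fieldType) (V : vectType K).

Definition coordfun (k : 'I_3) (eta : triple V) : V := eta k.
Fact coordfun_lin k : linear (coordfun k).
Proof. by move=> a x y; rewrite /coordfun !ffunE. Qed.
HB.instance Definition _ k := GRing.isLinear.Build K (triple V) V _ (coordfun k)
  (coordfun_lin k).

Definition sumfun (eta : triple V) : V := (\sum_(k < 3) eta k)%R.
Fact sumfun_lin : linear sumfun.
Proof.
move=> a x y; rewrite /sumfun scaler_sumr -big_split /=.
by apply: eq_bigr => k _; rewrite !ffunE.
Qed.
HB.instance Definition _ := GRing.isLinear.Build K (triple V) V _ sumfun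
  sumfun_lin.

Lemma coordfE k (eta : triple V) : coordf V k eta = eta k.
Proof. exact: (lfunE (coordfun k)). Qed.

Lemma sumfE (eta : triple V) : sumf V eta = (\sum_(k < 3) eta k)%R.
Proof. exact: (lfunE sumfun). Qed.

Variable r : rep V.

Lemma mem_Rsp eta : (eta \in Rsp r) = [forall k, eta k \in repY r k].
Proof.
apply/idP/forallP => [H k | H].
  move: H; rewrite memvE => /subv_bigcapP /(_ k isT); rewrite -memvE.
  by rewrite -memv_preim coordfE.
rewrite memvE; apply/subv_bigcapP => k _; rewrite -memvE -memv_preim coordfE.
exact: H.
Qed.

Lemma mem_X10 eta : (eta \in X10 r) =
   [forall k, eta k \in repY r k] && ((\sum_(k < 3) eta k)%R == 0%R).
Proof. by rewrite memv_cap mem_Rsp memv_ker sumfE. Qed.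

Lemma mem_Gp k eta : (eta \in Gp r k) = (eta \in Rsp r) && (eta k \in repX r k).
Proof. by rewrite memv_cap -memv_preim coordfE. Qed.

Lemma mem_Hp k eta : (eta \in Hp r k) = (eta \in Rsp r) && (eta k == 0%R).
Proof. by rewrite memv_cap memv_ker coordfE. Qed.

End Basic.

Section Compat.
Variables (K : fieldType) (W : vectType K) (X1 X2 : {vspace W}).
Hypothesis dX : (X1 :&: X2 = 0)%VS.

Definition cmp P := (P <= P :&: X1 + P :&: X2)%VS.

Lemma cmp_eq P : cmp P -> P = (P :&: X1 + P :&: X2)%VS.
Proof. by move=> H; apply/eqP; rewrite eqEsubv subv_add !capvSl !andbT. Qed.

Lemma cmp_join P Q : cmp P -> cmp Q -> cmp (P + Q).
Proof.
rewrite /cmp => hP hQ; apply: subv_trans (addvS hP hQ) _.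
have h1 X : (P :&: X <= (P + Q) :&: X)%VS by apply: capvS (addvSl P Q) (subvv X).
have h2 X : (Q :&: X <= (P + Q) :&: X)%VS by apply: capvS (addvSr P Q) (subvv X).
rewrite !subv_add.
by rewrite !(subv_trans (h1 _) (addvSl _ _)) !(subv_trans (h1 _) (addvSr _ _))
  !(subv_trans (h2 _) (addvSl _ _)) !(subv_trans (h2 _) (addvSr _ _)).
Qed.

Lemma cmp_meet P Q : cmp P -> cmp Q -> cmp (P :&: Q).
Proof.
rewrite /cmp => /subvP hP /subvP hQ; apply/subvP => v /memv_capP [vP vQ].
move: (hP v vP) => /memv_addP [p1 p1P [p2 p2P e1]].
move: (hQ v vQ) => /memv_addP [q1 q1Q [q2 q2Q e2]].
move: p1P p2P q1Q q2Q; rewrite !memv_cap => /andP[p1P p1X] /andP[p2P p2X]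
  /andP[q1Q q1X] /andP[q2Q q2X].
have : p1 - q1 \in (X1 :&: X2)%VS.
  rewrite memv_cap memvB //=.
  have -> : p1 - q1 = q2 - p2.
    by apply/eqP; rewrite subr_eq addrAC eq_sym subr_eq -e1 e2 addrC.
  by rewrite memvB.
rewrite dX memv0 subr_eq0 => /eqP ep.
have ep2 : p2 = q2.
  by apply: (addrI p1); rewrite -e1 ep -e2.
rewrite e1; apply: memv_add; rewrite !memv_cap ?p1P ?p1X ?p2P ?p2X /=.
  by rewrite ep q1Q.
by rewrite ep2 q2Q.
Qed.

Lemma cmp_eval top gx gy a : cmp top -> (forall k, cmp (gx k)) ->
  (forall k, cmp (gy k)) -> cmp (evalD top gx gy a).
Proof.
move=> ht hx hy; elim: a => //= a iha b ihb; [exact: cmp_meet | exact: cmp_join].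
Qed.

End Compat.

Section Rep.
Variables (K : fieldType) (V : vectType K) (r : rep V).
Local Notation X := (repX r).
Local Notation Y := (repY r).

Lemma decomp_contra (C B : {vspace V}) : indecomposable r ->
  (C :&: B = 0)%VS -> (C + B = fullv)%VS ->
  (forall k, cmp C B (X k)) -> (forall k, cmp C B (Y k)) ->
  C = 0%VS \/ B = 0%VS.
Proof.
move=> [_ nd] dCB sCB hx hy.
case: (eqVneq C 0%VS) => [->|nC]; first by left.
case: (eqVneq B 0%VS) => [->|nB]; first by right.
exfalso; apply: nd; exists C, B; split => // a.
apply: cmp_eq; apply: cmp_eval => //.
by rewrite /cmp !capfv sCB subvv.
Qed.

End Rep.
Local Close Scope vspace_scope.

Ltac subsum := first [ exact: subvv | match goal with
  | |- is_true (subsetv _ (addv ?P ?Q)) =>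
      first [ apply: (subv_trans _ (addvSl P Q)); subsum
            | apply: (subv_trans _ (addvSr P Q)); subsum ]
  end ].

Section Rep2.
Variables (K : fieldType) (V : vectType K) (r : rep V).
Local Notation X := (repX r).
Local Notation Y := (repY r).

Definition Wk k := (\sum_(m | m != k) Y m)%VS.

Lemma Y_Wk k m : m != k -> (Y m <= Wk k)%VS.
Proof. by move=> mk; apply: (sumv_sup m) => //. Qed.

Lemma X10_Wk : X10 r != 0%VS -> forall k, Wk k != 0%VS.
Proof.
move=> nz k; apply/eqP => W0.
have hp : vpick (X10 r) != 0 by rewrite vpick0.
have := memv_pick (X10 r); rewrite mem_X10 => /andP [/forallP hY /eqP hs].
set eta := vpick (X10 r) in hp hY hs.
have ho m : m != k -> eta m = 0.
  move=> mk; apply/eqP; rewrite -memv0 -W0.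
  exact: (subvP (Y_Wk mk)).
have hk : eta k = 0.
  by rewrite (bigD1 k) //= big1 ?addr0 in hs.
move/negP: hp; apply; apply/eqP/ffunP => m; rewrite ffunE.
by case: (eqVneq m k) => [->|/ho].
Qed.

Lemma Ysub : indecomposable r -> X10 r != 0%VS -> forall k, (Y k <= Wk k)%VS.
Proof.
move=> ind nz k; apply/negPn/negP => nY.
set W := Wk k.
pose C := if (X k <= W)%VS then (Y k :\: W)%VS else (X k :\: W)%VS.
have XY := repXY r k.
have CY : (C <= Y k)%VS.
  by rewrite /C; case: ifP => _; [exact: diffvSl | exact: subv_trans (diffvSl _ _) XY].
have CW : (C :&: W = 0)%VS by rewrite /C; case: ifP => _; exact: capv_diff.
have Cn : C != 0%VS by rewrite /C; case: ifP => h; rewrite diffv_eq0 ?h.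
have CX : (X k <= X k :&: C + X k :&: W)%VS.
  rewrite /C; case: ifP => h.
    by apply: subv_trans (addvSr _ _); rewrite subv_cap subvv h.
  rewrite -{1}(addv_diff_cap (X k) W) addvS //.
  by rewrite subv_cap diffvSl subvv.
set M := (C + W)%VS.
set F := (Y k :\: M)%VS.
set D := ((Y k + W)^C)%VS.
set B := (W + F + D)%VS.
have FY : (F <= Y k)%VS by exact: diffvSl.
have WB : (W <= B)%VS by rewrite /B; subsum.
have FB : (F <= B)%VS by rewrite /B; subsum.
have dCB : (C :&: B = 0)%VS.
  apply/eqP; rewrite -subv0; apply/subvP => v /memv_capP [vC].
  move=> /memv_addP [u /memv_addP [w wW [f fF ->]] [d dD ev]].
  have vY : v \in Y k by exact: (subvP CY).
  have fY : f \in Y k by exact: (subvP FY).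
  have d0 : d = 0.
    apply/eqP; rewrite -memv0 -(capv_compl (Y k + W)%VS) memv_cap dD andbT.
    have -> : d = v - w - f by rewrite ev -(addrA w f d) (addrC w) addrK (addrC f) addrK.
    have h1 : v \in (Y k + W)%VS by exact: (subvP (addvSl _ _)).
    have h2 : w \in (Y k + W)%VS by exact: (subvP (addvSr _ _)).
    have h3 : f \in (Y k + W)%VS by exact: (subvP (addvSl _ _)).
    by rewrite !memvB.
  have f0 : f = 0.
    apply/eqP; rewrite -memv0 -(capv_diff (Y k) M) memv_cap fF /=.
    have -> : f = v - w by rewrite ev d0 addr0 addrC addKr.
    have h1 : v \in M by exact: (subvP (addvSl _ _)).
    have h2 : w \in M by exact: (subvP (addvSr _ _)).
    by rewrite memvB.
  rewrite memv0; apply/eqP.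
  have : v \in (C :&: W)%VS by rewrite memv_cap vC ev d0 f0 !addr0.
  by rewrite CW memv0 => /eqP.
have sCB : (C + B = fullv)%VS.
  apply/eqP; rewrite eqEsubv subvf /= -(addv_complf (Y k + W)%VS).
  have hY : (Y k <= F + (C + W))%VS.
    by rewrite -{1}(addv_diff_cap (Y k) (C + W)) addvS // capvSr.
  rewrite /B !subv_add; apply/andP; split; [apply/andP; split|]; last by subsum.
    apply: subv_trans hY _; rewrite !subv_add; apply/andP; split; [|apply/andP; split]; subsum.
  subsum.
have hx : forall k', cmp C B (X k').
  move=> k'; rewrite /cmp; case: (eqVneq k' k) => [->|kk].
    apply: subv_trans CX _; apply: addvS => //.
    by apply: capvS.
  apply: subv_trans (addvSr _ _).
  rewrite subv_cap subvv /=; apply: subv_trans (repXY r k') _.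
  by apply: subv_trans WB; apply: Y_Wk.
have hy : forall k', cmp C B (Y k').
  move=> k'; rewrite /cmp; case: (eqVneq k' k) => [->|kk].
    rewrite -{1}(addv_diff_cap (Y k) M) subv_add; apply/andP; split.
      apply: subv_trans (addvSr _ _); by rewrite subv_cap FY FB.
    apply/subvP => y /memv_capP [yY /memv_addP [c cC [w wW ey]]].
    have cY : c \in Y k by exact: (subvP CY).
    have wY : w \in Y k by rewrite -[w](addKr c) -ey; apply: memvD; rewrite ?memvN.
    rewrite ey; apply: memv_add; rewrite memv_cap ?cY ?cC //.
    by rewrite wY (subvP WB).
  apply: subv_trans (addvSr _ _).
  rewrite subv_cap subvv /=.
  by apply: subv_trans WB; apply: Y_Wk.
have [C0|B0] := decomp_contra ind dCB sCB hx hy.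
- by move: Cn; rewrite C0 eqxx.
- have := X10_Wk nz k; rewrite -/W; apply/negP; rewrite negbK -subv0 -B0.
  exact: WB.
Qed.

End Rep2.

Section Rep3.
Variables (K : fieldType) (V : vectType K) (r : rep V).
Local Notation X := (repX r).
Local Notation Y := (repY r).

Lemma Y_S k : (Y k <= \sum_(m < 3) Y m)%VS.
Proof. by apply: (sumv_sup k). Qed.

Lemma Ysum : indecomposable r -> X10 r != 0%VS -> (\sum_(k < 3) Y k = fullv)%VS.
Proof.
move=> ind nz; set S := (\sum_(k < 3) Y k)%VS.
have hx k : cmp S (S^C)%VS (X k).
  apply: subv_trans (addvSl _ _); rewrite subv_cap subvv /=.
  exact: subv_trans (repXY r k) (Y_S k).
have hy k : cmp S (S^C)%VS (Y k).
  apply: subv_trans (addvSl _ _); rewrite subv_cap subvv /=.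
  exact: Y_S k.
have [S0|D0] := decomp_contra ind (capv_compl S) (addv_complf S) hx hy.
  have : (Wk r ord0 <= S)%VS by apply/subv_sumP => m _; exact: Y_S m.
  by rewrite S0 subv0 (negbTE (X10_Wk nz ord0)).
by rewrite -(addv_complf S) D0 addv0.
Qed.

Lemma lift_X10 k y : y \in Y k -> y \in Wk r k ->
  exists2 eta, eta \in X10 r & eta k = y.
Proof.
move=> yY /memv_sumP [vs hvs ey].
exists [ffun m => if m == k then y else - vs m]; last by rewrite ffunE eqxx.
rewrite mem_X10; apply/andP; split.
  apply/forallP => m; rewrite ffunE; case: eqP => [->|/eqP mk] //.
  by rewrite memvN; exact: hvs.
rewrite (bigD1 k) //= ffunE eqxx.
rewrite (eq_bigr (fun m => - vs m)); last by move=> m /negbTE mk; rewrite ffunE mk.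
by rewrite sumrN -ey subrr.
Qed.

Lemma phi_X10 k : (Y k <= Wk r k)%VS -> phi k (X10 r) = Y k.
Proof.
move=> h; apply/eqP; rewrite eqEsubv; apply/andP; split.
  apply/subvP => y /memv_imgP [eta etaX ->]; rewrite coordfE.
  by move: etaX; rewrite mem_X10 => /andP [/forallP ->].
apply/subvP => y yY; have [eta hX ek] := lift_X10 yY (subvP h y yY).
by rewrite -ek -coordfE; exact: memv_img.
Qed.

Lemma phi_G k : (Y k <= Wk r k)%VS -> phi k (Gp r k :&: X10 r)%VS = X k.
Proof.
move=> h; apply/eqP; rewrite eqEsubv; apply/andP; split.
  apply/subvP => y /memv_imgP [eta etaX ->]; rewrite coordfE.
  by move: etaX; rewrite memv_cap mem_Gp => /andP [/andP [_ ->]].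
apply/subvP => x xX.
have xY : x \in Y k by exact: (subvP (repXY r k)).
have [eta hX ek] := lift_X10 xY (subvP h x xY).
rewrite -ek -coordfE; apply: memv_img.
rewrite memv_cap hX andbT mem_Gp ek xX andbT.
by move: hX; rewrite memv_cap => /andP [].
Qed.

End Rep3.

Lemma swap_sub (M : zmodType) (x y z w : M) : x - y = z + w -> x - z = y + w.
Proof.
move/eqP; rewrite subr_eq => /eqP ->.
by rewrite addrAC (addrC z w) addrK addrC.
Qed.

Section Rep4.
Variables (K : fieldType) (V : vectType K) (r : rep V).
Local Notation X := (repX r).
Local Notation Y := (repY r).

Lemma phi_sub k (U : {vspace triple V}) : (U <= X10 r)%VS ->
  indecomposable r -> X10 r != 0%VS -> (phi k U <= Y k)%VS.
Proof.
move=> UX ind nz; rewrite -(phi_X10 (Ysub ind nz k)); exact: limgS.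
Qed.

Lemma zero_of_phi (A' : {vspace triple V}) :
  (\sum_(k < 3) phi k A')%VS = 0%VS -> A' = 0%VS.
Proof.
move=> A0; apply/eqP; rewrite -subv0; apply/subvP => a aA.
rewrite memv0; apply/eqP/ffunP => k; rewrite ffunE; apply/eqP.
rewrite -memv0 -A0; apply: (subvP (@sumv_sup _ _ _ k xpredT _ (fun m => phi m A') isT (subvv _))).
by rewrite -coordfE; exact: memv_img.
Qed.

Lemma phiplus_dec (A' B' : {vspace triple V}) : indecomposable r ->
  X10 r != 0%VS -> (A' :&: B' = 0)%VS -> (A' + B' = X10 r)%VS ->
  (forall k, cmp A' B' (Hp r k :&: X10 r)%VS) ->
  (forall k, cmp A' B' (Gp r k :&: X10 r)%VS) -> A' = 0%VS \/ B' = 0%VS.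
Proof.
move=> ind nz dAB sAB hH hG.
have hsub := Ysub ind nz; have hsum := Ysum ind nz.
set A := (\sum_(k < 3) phi k A')%VS.
set B := (\sum_(k < 3) phi k B')%VS.
have AX : (A' <= X10 r)%VS by rewrite -sAB addvSl.
have BX : (B' <= X10 r)%VS by rewrite -sAB addvSr.
have inRsp eta : eta \in X10 r -> eta \in Rsp r.
  by rewrite memv_cap => /andP [].
have dk k : (phi k A' :&: phi k B' = 0)%VS.
  apply/eqP; rewrite -subv0; apply/subvP => w.
  move=> /memv_capP [/memv_imgP [a aA ->] /memv_imgP [b bB]].
  move=> eab; rewrite !coordfE in eab *; rewrite memv0.
  have aX : a \in X10 r by exact: (subvP AX).
  have bX : b \in X10 r by exact: (subvP BX).
  have : a - b \in (Hp r k :&: X10 r)%VS.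
    rewrite memv_cap mem_Hp; apply/andP; split; [apply/andP; split|].
    - by apply: memvB; apply: inRsp.
    - by rewrite !ffunE eab subrr.
    - exact: memvB.
  move/(subvP (hH k)) => /memv_addP [h1 h1A [h2 h2B e]].
  move: h1A h2B; rewrite !memv_cap => /andP [h1H h1A] /andP [h2H h2B].
  have e2 : a - h1 = b + h2 by exact: swap_sub.
  have : a - h1 \in (A' :&: B')%VS.
    by rewrite memv_cap; apply/andP; split; [exact: memvB | rewrite e2; exact: memvD].
  rewrite dAB memv0 subr_eq0 => /eqP ->.
  by move: h1H; rewrite memv_ker coordfE => /andP [/andP [_ ->] _].
have dAB2 : (A :&: B = 0)%VS.
  apply/eqP; rewrite -subv0; apply/subvP => v /memv_capP [].
  move=> /memv_sumP [as_ has ev] /memv_sumP [bs hbs ev'].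
  pose g : triple V := [ffun k => as_ k - bs k].
  have gX : g \in X10 r.
    rewrite mem_X10; apply/andP; split.
      apply/forallP => k; rewrite ffunE.
      apply: memvB.
        by apply: (subvP (phi_sub k AX ind nz)); exact: has.
      by apply: (subvP (phi_sub k BX ind nz)); exact: hbs.
    rewrite (eq_bigr (fun k => as_ k - bs k)); last by move=> k _; rewrite ffunE.
    by rewrite sumrB -ev -ev' subrr.
  move: gX; rewrite -sAB => /memv_addP [al alA [be beB eg]].
  have ek k : as_ k = al k.
    have e1 : as_ k - al k = bs k + be k.
      have : g k = al k + be k by rewrite eg ffunE.
      by rewrite ffunE; exact: swap_sub.
    have : as_ k - al k \in (phi k A' :&: phi k B')%VS.
      rewrite memv_cap memvB ?has //=; last by rewrite -coordfE memv_img.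
      by rewrite e1 memvD ?hbs // -coordfE memv_img.
    by rewrite dk memv0 subr_eq0 => /eqP.
  rewrite memv0 ev (eq_bigr (fun k => al k)); last by move=> k _; rewrite ek.
  have : al \in X10 r by exact: (subvP AX).
  by rewrite mem_X10 => /andP [_].
have YAB k : Y k = (phi k A' + phi k B')%VS.
  by rewrite -(phi_X10 (hsub k)) -sAB /phi limgD.
have sAB2 : (A + B = fullv)%VS.
  apply/eqP; rewrite eqEsubv subvf /= -hsum; apply/subv_sumP => k _.
  rewrite YAB addvS //; exact: (sumv_sup k).
have hx k : cmp A B (X k).
  rewrite /cmp -{1}(phi_G (hsub k)) {1}(cmp_eq (hG k)) /phi limgD.
  apply: addvS; rewrite subv_cap; apply/andP; split.
  - rewrite -(phi_G (hsub k)); apply: limgS; exact: capvSl.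
  - apply: (sumv_sup k) => //; apply: limgS; exact: capvSr.
  - rewrite -(phi_G (hsub k)); apply: limgS; exact: capvSl.
  - apply: (sumv_sup k) => //; apply: limgS; exact: capvSr.
have hy k : cmp A B (Y k).
  rewrite /cmp {1}YAB; apply: addvS; rewrite subv_cap; apply/andP; split.
  - exact: phi_sub AX ind nz.
  - exact: (sumv_sup k).
  - exact: phi_sub BX ind nz.
  - exact: (sumv_sup k).
have [A0|B0] := decomp_contra ind dAB2 sAB2 hx hy.
  by left; apply: zero_of_phi.
by right; apply: zero_of_phi.
Qed.

End Rep4.

Section Transport.
Variables (K : fieldType) (V : vectType K) (r : rep V).

Definition UT := subvs_of (X10 r).
Definition fU : 'Hom(UT, triple V) := linfun vsval.

Lemma fUE u : fU u = vsval u.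
Proof. exact: lfunE. Qed.

Lemma fU_ker : lker fU == 0%VS.
Proof. by apply/lker0P => x y; rewrite !fUE; exact: subvs_inj. Qed.

Lemma fU_img : limg fU = X10 r.
Proof.
apply/eqP; rewrite eqEsubv; apply/andP; split.
  by apply/subvP => v /memv_imgP [u _ ->]; rewrite fUE subvsP.
apply/subvP => v vX.
have -> : v = fU (vsproj (X10 r) v) by rewrite fUE vsprojK.
exact: (memv_img fU (memvf _)).
Qed.

Lemma HpGp k : (Hp r k <= Gp r k)%VS.
Proof.
apply: capvS (subvv _) _; apply/subvP => v; rewrite memv_ker -memv_preim.
by move/eqP ->; rewrite mem0v.
Qed.

Definition rT : rep UT.
Proof.
refine (@Rep _ _ (fun k => fU @^-1: (Hp r k :&: X10 r))%VS
                 (fun k => fU @^-1: (Gp r k :&: X10 r))%VS _).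
by move=> k; apply: lpreimS; apply: capvS (HpGp k) (subvv _).
Defined.

Lemma evalT a : (fU @: rho rT a)%VS = PhiPlus r a.
Proof.
elim: a => [k|k||a iha b ihb|a iha b ihb] /=.
- by rewrite lpreimK // fU_img capvSr.
- by rewrite lpreimK // fU_img capvSr.
- exact: fU_img.
- by move: iha ihb; rewrite /rho /PhiPlus /= => <- <-; rewrite lker0_img_cap ?fU_ker.
- by move: iha ihb; rewrite /rho /PhiPlus /= => <- <-; rewrite limgD.
Qed.

Lemma PhiPlus_sub a : (PhiPlus r a <= X10 r)%VS.
Proof. by rewrite -evalT; apply: subv_trans (limgS fU (subvf _)) _; rewrite fU_img subvv. Qed.

Lemma indec_T : indecomposable r -> X10 r != 0%VS -> indecomposable rT.
Proof.
move=> ind nz; split.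
  apply/eqP => f0; move: nz; rewrite -fU_img f0 limg0 eqxx //.
move=> [A1 [A2 [n1 n2 d s h]]].
have hc a : cmp (fU @: A1)%VS (fU @: A2)%VS (PhiPlus r a).
  rewrite /cmp -evalT {1}(h a) limgD !lker0_img_cap ?fU_ker //; exact: subvv.
have dd : ((fU @: A1) :&: (fU @: A2) = 0)%VS.
  by rewrite -lker0_img_cap ?fU_ker // d limg0.
have ss : ((fU @: A1) + (fU @: A2) = X10 r)%VS by rewrite -limgD s fU_img.
have [A0|B0] := phiplus_dec ind nz dd ss (fun k => hc (Dx k)) (fun k => hc (Dy k)).
  by move: n1; rewrite -(eq_limg_ker0 _ _ fU_ker) A0 limg0 eqxx.
by move: n2; rewrite -(eq_limg_ker0 _ _ fU_ker) B0 limg0 eqxx.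
Qed.

Lemma PhiPlus_perfect z : perfect K z -> indecomposable r -> X10 r != 0%VS ->
  PhiPlus r z = 0%VS \/ PhiPlus r z = X10 r.
Proof.
move=> pz ind nz; have [e|e] := pz _ _ (indec_T ind nz).
  by left; rewrite -evalT e limg0.
by right; rewrite -evalT e fU_img.
Qed.

End Transport.

Lemma third (i j k m : 'I_3) : i != j -> k != i -> k != j -> m != k ->
  (m == i) || (m == j).
Proof.
by case: i => [[|[|[|?]]] ?] //; case: j => [[|[|[|?]]] ?] //;
   case: k => [[|[|[|?]]] ?] //; case: m => [[|[|[|?]]] ?].
Qed.

Theorem mainTheorem14 (K : fieldType) (z u : D222) (i j : 'I_3) :
  perfect K z -> i != j ->
  (forall (V : vectType K) (r : rep V), indecomposable r ->
     (phi i (PhiPlus r z) + phi j (PhiPlus r z))%VS = rho r u) ->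
  perfect K u.
Proof.
move=> pz ij hyp V r ind; rewrite -(hyp V r ind).
case: (eqVneq (X10 r) 0%VS) => [X0|nz].
  have S0 : PhiPlus r z = 0%VS by apply/eqP; rewrite -subv0 -X0 PhiPlus_sub.
  by left; rewrite S0 /phi !limg0 addv0.
have [S0|S1] := PhiPlus_perfect pz ind nz.
  by left; rewrite S0 /phi !limg0 addv0.
right; rewrite S1 !phi_X10 ?(Ysub ind nz) // -(Ysum ind nz).
apply/eqP; rewrite eqEsubv subv_add !Y_S /=.
apply/subv_sumP => k _.
case: (eqVneq k i) => [->|ki]; first exact: addvSl.
case: (eqVneq k j) => [->|kj]; first exact: addvSr.
apply: subv_trans (Ysub ind nz k) _; apply/subv_sumP => m mk.
by case/orP: (third ij ki kj mk) => /eqP ->; [exact: addvSl | exact: addvSr].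
Qed.
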